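(* Let $A$ be a $d$-dimensional system, $B=B_1B_2$ with $B_1$ finite-dimensional and $B_2$ a qubit, and $C$ a qubit. Let $\rho_1^{AB_1},\rho_2^{AB_1}$ be states, $p_1,p_2\ge0$ with $p_1+p_2=1$, and $$\rho^{ABC}=p_1\,\rho_1^{AB_1}\otimes|\Psi^+\rangle\langle\Psi^+|^{B_2C}+p_2\,\rho_2^{AB_1}\otimes|\Psi^-\rangle\langle\Psi^-|^{B_2C},$$ with $|\Psi^\pm\rangle=(|01\rangle\pm|10\rangle)/\sqrt2$. Then for every CPTP map $\Lambda$ on system $A$, $$E^{AB|C}\big((\Lambda^A\otimes\mathrm{id}^{BC})[\rho^{ABC}]\big)=\tfrac12\big\|(\Lambda^A\otimes\mathrm{id}^{B_1})[p_1\rho_1^{AB_1}-p_2\rho_2^{AB_1}]\big\|_1 .$$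
   Context: Negativity of a bipartite operator $X$ with respect to the cut $X_1|X_2$ is $E^{X_1|X_2}(X)=\frac{\|X^{T_{X_2}}\|_1-1}{2}$, where $T_{X_2}$ is the partial transpose on $X_2$ and $\|M\|_1=\mathrm{Tr}\sqrt{M^\dagger M}$; $E^{AB|C}$ treats $AB=AB_1B_2$ as one party and $C$ as the other. *)

(* Defs.v *)
From HB Require Import structures.
From mathcomp Require Import all_boot all_order all_algebra all_field.
From Stdlib Require Import ClassicalEpsilon.
Set Implicit Arguments. Unset Strict Implicit. Unset Printing Implicit Defensive.
Import Order.TTheory GRing.Theory Num.Theory.
Local Open Scope ring_scope.

Definition idx {m n} (i : 'I_m) (j : 'I_n) : 'I_(m * n) := mxvec_index i j.
Definition unidx {m n} (k : 'I_(m * n)) : 'I_m * 'I_n :=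
  enum_val (cast_ord (esym (@mxvec_cast m n)) k).
Definition ix1 {m n} (k : 'I_(m * n)) : 'I_m := (unidx k).1.
Definition ix2 {m n} (k : 'I_(m * n)) : 'I_n := (unidx k).2.

Definition adjmx {m n} (M : 'M[algC]_(m, n)) : 'M[algC]_(n, m) := (map_mx Num.conj M)^T.

Definition psd {n} (M : 'M[algC]_n) : Prop :=
  adjmx M = M /\ forall v : 'cV[algC]_n, 0 <= (adjmx v *m M *m v) 0 0.

Definition density {n} (M : 'M[algC]_n) : Prop := psd M /\ \tr M = 1.

Definition psd_sqrt {n} (P : 'M[algC]_n) : 'M[algC]_n :=
  epsilon (inhabits 0) (fun S : 'M[algC]_n => psd S /\ S *m S = P).
Definition trnorm {n} (M : 'M[algC]_n) : algC := \tr (psd_sqrt (adjmx M *m M)).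

(* (Lam (x) id_R)[X] for X an operator on A (x) R (A first factor). *)
Definition apply_A {d d' k} (Lam : 'M[algC]_d -> 'M[algC]_d')
    (X : 'M[algC]_(d * k)) : 'M[algC]_(d' * k) :=
  \matrix_(i, j)
    Lam (\matrix_(a, b) X (idx a (ix2 i)) (idx b (ix2 j))) (ix1 i) (ix1 j).

Definition CPTP {d d'} (Lam : {linear 'M[algC]_d -> 'M[algC]_d'}) : Prop :=
  (forall k (X : 'M[algC]_(d * k)), psd X -> psd (apply_A (k := k) Lam X)) /\
  (forall X, \tr (Lam X) = \tr X).

(* Four-party layout A (x) (B1 (x) (B2 (x) C)), i.e. index (a,(b1,(b2,c))). *)
Notation op4 d m := 'M[algC]_(d * (m * (2 * 2))).

Definition tens_AB1 {d m} (X : 'M[algC]_(d * m)) (Y : 'M[algC]_(2 * 2)) : op4 d m :=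
  \matrix_(i, j)
    (X (idx (ix1 i) (ix1 (ix2 i))) (idx (ix1 j) (ix1 (ix2 j))) *
     Y (ix2 (ix2 i)) (ix2 (ix2 j))).

Definition idxC {d m} (i : 'I_(d * (m * (2 * 2)))) : 'I_2 := ix2 (ix2 (ix2 i)).
Definition setC {d m} (i : 'I_(d * (m * (2 * 2)))) (c : 'I_2) : 'I_(d * (m * (2 * 2))) :=
  idx (ix1 i) (idx (ix1 (ix2 i)) (idx (ix1 (ix2 (ix2 i))) c)).

Definition ptransC {d m} (X : op4 d m) : op4 d m :=
  \matrix_(i, j) X (setC i (idxC j)) (setC j (idxC i)).

Definition negativity_ABC {d m} (X : op4 d m) : algC := (trnorm (ptransC X) - 1) / 2.

Definition ket2 (x y : 'I_2) : 'cV[algC]_(2 * 2) := delta_mx (idx x y) 0.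
Definition psi_plus : 'cV[algC]_(2 * 2) :=
  (sqrtC 2)^-1 *: (ket2 0 1 + ket2 1 0).
Definition psi_minus : 'cV[algC]_(2 * 2) :=
  (sqrtC 2)^-1 *: (ket2 0 1 - ket2 1 0).
Definition proj {n} (v : 'cV[algC]_n) : 'M[algC]_n := v *m adjmx v.

(* Main.v *)
Require Import Defs.
From HB Require Import structures.
From mathcomp Require Import all_boot all_order all_algebra all_field.
From mathcomp Require Import ring.
From Stdlib Require Import ClassicalEpsilon.
Set Implicit Arguments. Unset Strict Implicit. Unset Printing Implicit Defensive.
Import Order.TTheory GRing.Theory Num.Theory.
Local Open Scope ring_scope.

Lemma unidx_idx m n (a : 'I_m) (b : 'I_n) : unidx (idx a b) = (a, b).
Proof. by rewrite /unidx /idx /mxvec_index cast_ordK enum_rankK. Qed.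
Lemma ix1_idx m n (a : 'I_m) (b : 'I_n) : ix1 (idx a b) = a.
Proof. by rewrite /ix1 unidx_idx. Qed.
Lemma ix2_idx m n (a : 'I_m) (b : 'I_n) : ix2 (idx a b) = b.
Proof. by rewrite /ix2 unidx_idx. Qed.
Lemma idx_ix m n (k : 'I_(m * n)) : idx (ix1 k) (ix2 k) = k.
Proof.
rewrite /ix1 /ix2 /idx /unidx /mxvec_index -surjective_pairing enum_valK.
by rewrite cast_ordKV.
Qed.
Lemma idx_eq m n (a a' : 'I_m) (b b' : 'I_n) :
  (idx a b == idx a' b') = (a == a') && (b == b').
Proof.
have [E|NE] := eqP.
  have E1 := congr1 ix1 E; have E2 := congr1 ix2 E.
  by rewrite !ix1_idx in E1; rewrite !ix2_idx in E2; rewrite E1 E2 !eqxx.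
by apply/esym/negP => /andP[/eqP Ea /eqP Eb]; apply: NE; rewrite Ea Eb.
Qed.

Lemma sum_idx m n (F : 'I_(m * n) -> algC) :
  \sum_k F k = \sum_a \sum_b F (idx a b).
Proof.
rewrite pair_big /=.
rewrite (reindex (fun u : 'I_m * 'I_n => idx u.1 u.2)) /=; last first.
  exists (@unidx m n) => [u _|k _]; first by rewrite unidx_idx -surjective_pairing.
  by rewrite idx_ix.
by [].
Qed.

Lemma adjmxE m n (M : 'M[algC]_(m, n)) i j : adjmx M i j = (M j i)^*.
Proof. by rewrite /adjmx !mxE. Qed.
Lemma adjmxK m n (M : 'M[algC]_(m, n)) : adjmx (adjmx M) = M.
Proof. by apply/matrixP => i j; rewrite !adjmxE conjCK. Qed.
Lemma adjmxM m n p (A : 'M[algC]_(m, n)) (B : 'M[algC]_(n, p)) :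
  adjmx (A *m B) = adjmx B *m adjmx A.
Proof. by rewrite /adjmx map_mxM trmx_mul. Qed.
Lemma adjmxD m n (A B : 'M[algC]_(m, n)) : adjmx (A + B) = adjmx A + adjmx B.
Proof. by rewrite /adjmx map_mxD linearD. Qed.
Lemma adjmxZ m n a (A : 'M[algC]_(m, n)) : adjmx (a *: A) = a^* *: adjmx A.
Proof. by rewrite /adjmx map_mxZ linearZ. Qed.
Lemma adjmxN m n (A : 'M[algC]_(m, n)) : adjmx (- A) = - adjmx A.
Proof. by apply/matrixP => i j; rewrite !mxE rmorphN. Qed.
Lemma adjmx1 n : adjmx (1%:M : 'M[algC]_n) = 1%:M.
Proof. by rewrite /adjmx map_mx1 trmx1. Qed.

Lemma quad_ge0 n (w : 'cV[algC]_n) : 0 <= (adjmx w *m w) 0 0.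
Proof.
rewrite mxE; apply: sumr_ge0 => i _; rewrite adjmxE mulrC; exact: mul_conjC_ge0.
Qed.
Lemma quad_eq0 n (w : 'cV[algC]_n) : (adjmx w *m w) 0 0 = 0 -> w = 0.
Proof.
rewrite mxE => /eqP; rewrite psumr_eq0 => [/allP H|i _]; last first.
  by rewrite adjmxE mulrC mul_conjC_ge0.
apply/matrixP => i j; rewrite (ord1 j) mxE.
have /implyP := H i (mem_index_enum _) => /(_ isT).
by rewrite adjmxE mulrC mul_conjC_eq0 => /eqP.
Qed.

Lemma psd_gram m n (T : 'M[algC]_(m, n)) : psd (adjmx T *m T).
Proof.
split; first by rewrite adjmxM adjmxK.
move=> v; have -> : adjmx v *m (adjmx T *m T) *m v = adjmx (T *m v) *m (T *m v).
  by rewrite adjmxM !mulmxA.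
exact: quad_ge0.
Qed.

Lemma trC_adj m n (M : 'M[algC]_(m, n)) : map_mx Num.conj (M ^T) = adjmx M.
Proof. by rewrite /adjmx map_trmx. Qed.

Lemma herm_spec n (P : 'M[algC]_n) : adjmx P = P ->
  exists U : 'M_n, exists l : 'rV_n,
    [/\ U *m adjmx U = 1%:M, P = adjmx U *m diag_mx l *m U &
        forall i, l 0 i \is Num.real].
Proof.
move=> HP.
have hP : P \is hermsymmx.
  by rewrite is_hermitianmxE expr0 scale1r trC_adj HP eqxx.
have Uu := spectral_unitarymx P.
exists (spectralmx P), (spectral_diag P); split.
- by move/unitarymxP: Uu; rewrite trC_adj.
- rewrite -trC_adj -invmx_unitary //; apply/orthomx_spectralP.
  exact: hermitian_normalmx.
- by move=> i; have /mxOverP := hermitian_spectral_diag_real hP; apply.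
Qed.

Lemma adjmx_delta m n (i : 'I_m) (j : 'I_n) : adjmx (delta_mx i j) = delta_mx j i.
Proof. by apply/matrixP => a b; rewrite adjmxE !mxE rmorph_nat andbC. Qed.

Lemma adjmx_diag n (r : 'rV[algC]_n) : (forall i, (r 0 i)^* = r 0 i) ->
  adjmx (diag_mx r) = diag_mx r.
Proof.
move=> Hr; apply/matrixP => a b; rewrite adjmxE !mxE rmorphMn eq_sym.
by case: eqP => [->|_]; rewrite ?mulr0n ?mulr1n //; exact: Hr.
Qed.

Lemma diag_delta n (l : 'rV[algC]_n) i :
  diag_mx l *m delta_mx i 0 = l 0 i *: (delta_mx i 0 : 'cV_n).
Proof.
rewrite mul_diag_mx; apply/matrixP => a b; rewrite !mxE.
by case: eqP => [->|]; rewrite ?mulr1 ?mulr0.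
Qed.

Lemma delta_quad n (A : 'M[algC]_n) i :
  (delta_mx (0 : 'I_1) i *m A *m delta_mx i (0 : 'I_1)) 0 0 = A i i.
Proof. by rewrite -rowE -colE !mxE. Qed.

Lemma spec_ge0 n (P U : 'M[algC]_n) (l : 'rV_n) : psd P ->
  U *m adjmx U = 1%:M -> P = adjmx U *m diag_mx l *m U -> forall i, 0 <= l 0 i.
Proof.
move=> [_ HP] HU EP i; have := HP (adjmx U *m delta_mx i 0).
rewrite adjmxM adjmxK adjmx_delta EP.
rewrite !mulmxA -[_ *m U *m adjmx U]mulmxA HU mulmx1.
rewrite -[_ *m U *m adjmx U]mulmxA HU mulmx1.
by rewrite delta_quad mxE eqxx mulr1n.
Qed.

Lemma psd_conj_diag n (U : 'M[algC]_n) (s : 'rV_n) : (forall i, 0 <= s 0 i) ->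
  psd (adjmx U *m diag_mx s *m U).
Proof.
move=> Hs; pose r := \row_i sqrtC (s 0 i).
have Hr : forall i, (r 0 i)^* = r 0 i by move=> i; rewrite geC0_conj // mxE sqrtC_ge0.
have -> : adjmx U *m diag_mx s *m U = adjmx (diag_mx r *m U) *m (diag_mx r *m U).
  rewrite adjmxM adjmx_diag // !mulmxA -[_ *m diag_mx r *m diag_mx r]mulmxA mulmx_diag.
  congr (_ *m diag_mx _ *m _); apply/rowP => i; rewrite !mxE -expr2 sqrtCK //.
exact: psd_gram.
Qed.

Lemma psd_sqrt_ex n (P : 'M[algC]_n) : psd P -> exists S, psd S /\ S *m S = P.
Proof.
move=> HP; have [U [l [HU EP Hl]]] := herm_spec HP.1.
have l0 := spec_ge0 HP HU EP.
pose s := \row_i sqrtC (l 0 i).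
exists (adjmx U *m diag_mx s *m U); split.
  by apply: psd_conj_diag => i; rewrite mxE sqrtC_ge0.
rewrite EP !mulmxA -[_ *m U *m adjmx U]mulmxA HU mulmx1 -[adjmx U *m diag_mx s *m diag_mx s]mulmxA mulmx_diag.
congr (_ *m diag_mx _ *m _); apply/rowP => i; rewrite !mxE -expr2 sqrtCK //.
Qed.

Lemma psd_quad0 n (S : 'M[algC]_n) (v : 'cV[algC]_n) : psd S ->
  (adjmx v *m S *m v) 0 0 = 0 -> S *m v = 0.
Proof.
move=> HS; have [R [[HR _] ERS]] := psd_sqrt_ex HS.
rewrite -ERS; have -> : adjmx v *m (R *m R) *m v = adjmx (R *m v) *m (R *m v).
  by rewrite adjmxM HR !mulmxA.
by move/quad_eq0; rewrite -mulmxA => ->; rewrite mulmx0.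
Qed.

Lemma psd_sqrt_uniq n (S T : 'M[algC]_n) :
  psd S -> psd T -> S *m S = T *m T -> S = T.
Proof.
move=> HS HT E.
pose H := S - T.
have HH : adjmx H = H by rewrite adjmxD adjmxN HS.1 HT.1.
have [W [mu [HW EH Hmu]]] := herm_spec HH.
suff mu0 : forall i, mu 0 i = 0.
  apply/eqP; rewrite -subr_eq0; apply/eqP; rewrite -/H EH.
  have -> : diag_mx mu = 0 by apply/matrixP => a b; rewrite !mxE mu0 mul0rn.
  by rewrite mulmx0 mul0mx.
move=> i; pose v := adjmx W *m delta_mx i (0:'I_1).
have Hv : H *m v = mu 0 i *: v.
  rewrite EH /v !mulmxA -[_ *m W *m adjmx W]mulmxA HW mulmx1.
  by rewrite -mulmxA diag_delta scalemxAr.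
have vv : (adjmx v *m v) 0 0 = 1.
  rewrite /v adjmxM adjmxK adjmx_delta !mulmxA -[_ *m W *m adjmx W]mulmxA HW mulmx1.
  by rewrite mul_delta_mx mxE !eqxx.
clearbody v.
have Hvl : adjmx v *m H = mu 0 i *: adjmx v.
  by rewrite -HH -adjmxM Hv adjmxZ conj_Creal.
have key : (adjmx v *m (S *m S - T *m T) *m v) 0 0 =
    mu 0 i * ((adjmx v *m S *m v) 0 0 + (adjmx v *m T *m v) 0 0).
  have -> : S *m S - T *m T = S *m H + H *m T.
    by rewrite /H mulmxBr mulmxBl addrA subrK.
  rewrite mulmxDr mulmxDl -!mulmxA Hv !mulmxA Hvl.
  by rewrite -scalemxAr -!scalemxAl !mxE mulrDr.
move: key; rewrite E subrr mulmx0 mul0mx mxE => /esym /eqP.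
rewrite mulf_eq0 => /orP[/eqP //|].
rewrite paddr_eq0 ?HS.2 ?HT.2 // => /andP[/eqP a0 /eqP b0].
have Sv := psd_quad0 HS a0; have Tv := psd_quad0 HT b0.
have : H *m v = 0 by rewrite /H mulmxBl Sv Tv subrr.
rewrite Hv => Ev.
have := congr1 (fun M : 'M[algC]_1 => M 0 0) (congr1 (mulmx (adjmx v)) Ev).
by rewrite /= mulmx0 -scalemxAr mxE vv mulr1 mxE.
Qed.

Lemma trnorm_charact n (M S : 'M[algC]_n) :
  psd S -> S *m S = adjmx M *m M -> trnorm M = \tr S.
Proof.
move=> HS ES; rewrite /trnorm /psd_sqrt.
have [S' HS'] := psd_sqrt_ex (psd_gram M).
have := epsilon_spec (inhabits 0) (fun S0 : 'M[algC]_n => psd S0 /\ S0 *m S0 = adjmx M *m M)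
  (ex_intro _ S' HS').
move=> [H1 H2]; congr (\tr _); apply: psd_sqrt_uniq => //; by rewrite H2 ES.
Qed.

Lemma sum_op4 d m q (F : 'I_(d * m) -> 'I_q -> algC) :
  \sum_(k : 'I_(d * (m * q))) F (idx (ix1 k) (ix1 (ix2 k))) (ix2 (ix2 k)) =
  \sum_u \sum_t F u t.
Proof.
rewrite sum_idx [RHS]sum_idx.
under eq_bigr => a _ do under eq_bigr => b _ do rewrite !ix1_idx !ix2_idx.
under eq_bigr => a _ do rewrite (sum_idx (fun r => F (idx a (ix1 r)) (ix2 r))).
apply: eq_bigr => a _; apply: eq_bigr => b _; apply: eq_bigr => c _.
by rewrite ix1_idx ix2_idx.
Qed.

Lemma tens_mul d m (X X' : 'M[algC]_(d * m)) (Y Y' : 'M[algC]_(2 * 2)) :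
  tens_AB1 X Y *m tens_AB1 X' Y' = tens_AB1 (X *m X') (Y *m Y').
Proof.
apply/matrixP => i j; rewrite !mxE.
under eq_bigr do rewrite !mxE.
rewrite (sum_op4 (fun u t => X (idx (ix1 i) (ix1 (ix2 i))) u * Y (ix2 (ix2 i)) t *
   (X' u (idx (ix1 j) (ix1 (ix2 j))) * Y' t (ix2 (ix2 j))))).
rewrite big_distrlr /=; apply: eq_bigr => u _; apply: eq_bigr => t _.
by rewrite mulrACA.
Qed.

Lemma adjmx_tens d m (X : 'M[algC]_(d * m)) (Y : 'M[algC]_(2 * 2)) :
  adjmx (tens_AB1 X Y) = tens_AB1 (adjmx X) (adjmx Y).
Proof. by apply/matrixP => i j; rewrite !(adjmxE, mxE) rmorphM. Qed.

Lemma tr_tens d m (X : 'M[algC]_(d * m)) (Y : 'M[algC]_(2 * 2)) :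
  \tr (tens_AB1 X Y) = \tr X * \tr Y.
Proof.
rewrite /mxtrace; under eq_bigr do rewrite mxE.
rewrite (sum_op4 (fun u t => X u u * Y t t)) big_distrlr /=.
by apply: eq_bigr => u _.
Qed.

Lemma psd_tens d m (X : 'M[algC]_(d * m)) (Y : 'M[algC]_(2 * 2)) :
  psd X -> psd Y -> psd (tens_AB1 X Y).
Proof.
move=> /psd_sqrt_ex [A [[HA _] <-]] /psd_sqrt_ex [B [[HB _] <-]].
rewrite -tens_mul -{1}HA -{1}HB -adjmx_tens; exact: psd_gram.
Qed.

Definition blk {d k} (X : 'M[algC]_(d * k)) (r s : 'I_k) : 'M[algC]_d :=
  \matrix_(a, b) X (idx a r) (idx b s).


Lemma apply_AE (d d' : nat) (Lam : {linear 'M[algC]_d -> 'M[algC]_d'}) k (X : 'M[algC]_(d * k)) i j :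
  apply_A (k := k) Lam X i j = Lam (blk X (ix2 i) (ix2 j)) (ix1 i) (ix1 j).
Proof. by rewrite mxE. Qed.

Lemma apply_AD (d d' : nat) (Lam : {linear 'M[algC]_d -> 'M[algC]_d'}) k (X Y : 'M[algC]_(d * k)) :
  apply_A (k := k) Lam (X + Y) = apply_A Lam X + apply_A Lam Y.
Proof.
apply/matrixP => i j; rewrite apply_AE [RHS]mxE !apply_AE.
have -> : blk (X + Y) (ix2 i) (ix2 j) = blk X (ix2 i) (ix2 j) + blk Y (ix2 i) (ix2 j).
  by apply/matrixP => a b; rewrite !mxE.
by rewrite linearD mxE.
Qed.

Lemma apply_AZ (d d' : nat) (Lam : {linear 'M[algC]_d -> 'M[algC]_d'}) k c (X : 'M[algC]_(d * k)) :
  apply_A (k := k) Lam (c *: X) = c *: apply_A Lam X.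
Proof.
apply/matrixP => i j; rewrite apply_AE [RHS]mxE !apply_AE.
have -> : blk (c *: X) (ix2 i) (ix2 j) = c *: blk X (ix2 i) (ix2 j).
  by apply/matrixP => a b; rewrite !mxE.
by rewrite linearZ mxE.
Qed.

Lemma apply_AB (d d' : nat) (Lam : {linear 'M[algC]_d -> 'M[algC]_d'}) k (X Y : 'M[algC]_(d * k)) :
  apply_A (k := k) Lam (X - Y) = apply_A Lam X - apply_A Lam Y.
Proof.
by rewrite apply_AD -scaleN1r apply_AZ scaleN1r.
Qed.

Lemma apply_A_tens (d d' : nat) (Lam : {linear 'M[algC]_d -> 'M[algC]_d'}) m (X : 'M[algC]_(d * m)) (Y : 'M[algC]_(2 * 2)) :
  apply_A (k := m * (2 * 2)) Lam (tens_AB1 X Y) = tens_AB1 (apply_A (k := m) Lam X) Y.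
Proof.
apply/matrixP => i j; rewrite apply_AE [RHS]mxE apply_AE !ix1_idx !ix2_idx.
have -> : blk (tens_AB1 X Y) (ix2 i) (ix2 j) =
   Y (ix2 (ix2 i)) (ix2 (ix2 j)) *: blk X (ix1 (ix2 i)) (ix1 (ix2 j)).
  by apply/matrixP => a b; rewrite !mxE !ix1_idx !ix2_idx mulrC.
by rewrite linearZ mxE mulrC.
Qed.

Lemma tr_apply_A (d d' : nat) (Lam : {linear 'M[algC]_d -> 'M[algC]_d'}) k (X : 'M[algC]_(d * k)) :
  (forall Z, \tr (Lam Z) = \tr Z) -> \tr (apply_A (k := k) Lam X) = \tr X.
Proof.
move=> HT; rewrite /mxtrace.
under eq_bigr do rewrite apply_AE.
rewrite sum_idx.
under eq_bigr => a _ do under eq_bigr => b _ do rewrite ix1_idx ix2_idx.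
rewrite exchange_big /=.
rewrite [RHS]sum_idx [RHS]exchange_big /=.
apply: eq_bigr => b _.
have := HT (blk X b b); rewrite /mxtrace => ->.
by apply: eq_bigr => a _; rewrite mxE.
Qed.

Lemma I2P (x : 'I_2) : x = 0 \/ x = 1.
Proof. by case: x => [[|[|n]] H] //; [left|right]; apply: val_inj. Qed.

Lemma sum2 (F : 'I_2 -> algC) : \sum_x F x = F 0 + F 1.
Proof.
rewrite big_ord_recl big_ord1; congr (F _ + F _); exact: val_inj.
Qed.

Definition ptr2 (Y : 'M[algC]_(2 * 2)) : 'M[algC]_(2 * 2) :=
  \matrix_(i, j) Y (idx (ix1 i) (ix2 j)) (idx (ix1 j) (ix2 i)).

Lemma ptransC_tens d m (X : 'M[algC]_(d * m)) (Y : 'M[algC]_(2 * 2)) :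
  ptransC (tens_AB1 X Y) = tens_AB1 X (ptr2 Y).
Proof.
apply/matrixP => i j; rewrite /ptransC /setC /idxC !mxE !ix1_idx !ix2_idx.
by rewrite ?(ix1_idx, ix2_idx).
Qed.

Lemma ptransCD d m (A B : op4 d m) : ptransC (A + B) = ptransC A + ptransC B.
Proof. by apply/matrixP => i j; rewrite !mxE. Qed.
Lemma ptransCZ d m c (A : op4 d m) : ptransC (c *: A) = c *: ptransC A.
Proof. by apply/matrixP => i j; rewrite !mxE. Qed.

Definition mk4 (f : 'I_2 -> 'I_2 -> 'I_2 -> 'I_2 -> nat) : 'M[algC]_(2 * 2) :=
  \matrix_(i, j) (f (ix1 i) (ix2 i) (ix1 j) (ix2 j))%:R.

Lemma mk4E f b c b' c' : mk4 f (idx b c) (idx b' c') = (f b c b' c')%:R.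
Proof. by rewrite mxE !ix1_idx !ix2_idx. Qed.

Lemma eq4 (A B : 'M[algC]_(2 * 2)) :
  (forall b c b' c', A (idx b c) (idx b' c') = B (idx b c) (idx b' c')) -> A = B.
Proof. by move=> H; apply/matrixP => i j; rewrite -(idx_ix i) -(idx_ix j). Qed.

Lemma mul4E (A B : 'M[algC]_(2 * 2)) b c b' c' :
  (A *m B) (idx b c) (idx b' c') =
  A (idx b c) (idx 0 0) * B (idx 0 0) (idx b' c') +
  A (idx b c) (idx 0 1) * B (idx 0 1) (idx b' c') +
 (A (idx b c) (idx 1 0) * B (idx 1 0) (idx b' c') +
  A (idx b c) (idx 1 1) * B (idx 1 1) (idx b' c')).
Proof. by rewrite mxE sum_idx !sum2. Qed.

Definition Pm := mk4 (fun b c b' c' => (b == b') && (c == c') && (b != c)).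
Definition Qm := mk4 (fun b c b' c' => (b == c) && (b' == c') && (b != b')).
Definition Pd := mk4 (fun b c b' c' => (b == b') && (c == c') && (b == c)).

Ltac case4 b c b' c' :=
  case: (I2P b) => ->; case: (I2P c) => ->; case: (I2P b') => ->; case: (I2P c') => ->.
Ltac case4i := let b := fresh "b" in let c := fresh "c" in
  let b' := fresh "b'" in let c' := fresh "c'" in intros b c b' c'; case4 b c b' c'.

Lemma PmPm : Pm *m Pm = Pm.
Proof.
apply: eq4 => b c b' c'; rewrite mul4E !mk4E -!natrM -!natrD.
by case4 b c b' c'.
Qed.

Ltac prod4 := apply: eq4; case4i; rewrite ?mul4E !mk4E ?mxE -?natrM -?natrD.

Lemma PmQm : Pm *m Qm = 0.
Proof. by prod4; rewrite ?mxE. Qed.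
Lemma QmPm : Qm *m Pm = 0.
Proof. by prod4; rewrite ?mxE. Qed.
Lemma QmQm : Qm *m Qm = Pd.
Proof. by prod4. Qed.
Lemma PmPd : Pm *m Pd = 0.
Proof. by prod4; rewrite ?mxE. Qed.
Lemma PdPm : Pd *m Pm = 0.
Proof. by prod4; rewrite ?mxE. Qed.
Lemma PdPd : Pd *m Pd = Pd.
Proof. by prod4. Qed.

Lemma adjmk4 f : adjmx (mk4 f) = mk4 (fun b c b' c' => f b' c' b c).
Proof. by apply/matrixP => i j; rewrite adjmxE !mxE rmorph_nat. Qed.

Lemma adjPm : adjmx Pm = Pm.
Proof. by rewrite adjmk4; apply: eq4 => b c b' c'; rewrite !mk4E; case4 b c b' c'. Qed.
Lemma adjQm : adjmx Qm = Qm.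
Proof. by rewrite adjmk4; apply: eq4 => b c b' c'; rewrite !mk4E; case4 b c b' c'. Qed.
Lemma adjPd : adjmx Pd = Pd.
Proof. by rewrite adjmk4; apply: eq4 => b c b' c'; rewrite !mk4E; case4 b c b' c'. Qed.

Lemma tr4 (A : 'M[algC]_(2 * 2)) :
  \tr A = A (idx 0 0) (idx 0 0) + A (idx 0 1) (idx 0 1) +
          (A (idx 1 0) (idx 1 0) + A (idx 1 1) (idx 1 1)).
Proof. by rewrite /mxtrace sum_idx !sum2. Qed.

Lemma trPm : \tr Pm = 2.
Proof. by rewrite tr4 !mk4E -!natrD. Qed.
Lemma trPd : \tr Pd = 2.
Proof. by rewrite tr4 !mk4E -!natrD. Qed.

Lemma psdPm : psd Pm.
Proof. by rewrite -PmPm -{1}adjPm; apply: psd_gram. Qed.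
Lemma psdPd : psd Pd.
Proof. by rewrite -PdPd -{1}adjPd; apply: psd_gram. Qed.

Definition kk : algC := (sqrtC 2)^-1.
Lemma kk_conj : kk^* = kk.
Proof. by rewrite geC0_conj // /kk invr_ge0 sqrtC_ge0 ler0n. Qed.
Lemma kk_real : kk \is Num.real.
Proof. by rewrite ger0_real // /kk invr_ge0 sqrtC_ge0 ler0n. Qed.
Lemma kk2 : kk * kk = 2^-1.
Proof. by rewrite /kk -invfM -expr2 sqrtCK. Qed.

Lemma projE n (v : 'cV[algC]_n) i j : proj v i j = v i 0 * (v j 0)^*.
Proof. by rewrite /proj mxE big_ord1 adjmxE. Qed.

Lemma psi_plusE b c : psi_plus (idx b c) 0 =
  kk * ((b == 0) && (c == 1) + (b == 1) && (c == 0))%:R.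
Proof. by rewrite /psi_plus /ket2 !mxE !idx_eq !eqxx !andbT natrD. Qed.
Lemma psi_minusE b c : psi_minus (idx b c) 0 =
  kk * (((b == 0) && (c == 1))%:R - ((b == 1) && (c == 0))%:R).
Proof. by rewrite /psi_minus /ket2 !mxE !idx_eq !eqxx !andbT. Qed.

Lemma ptrYp : ptr2 (proj psi_plus) = 2^-1 *: (Pm + Qm).
Proof.
apply: eq4 => b c b' c'.
rewrite mxE ?(ix1_idx, ix2_idx) projE !psi_plusE conj_Creal; last first.
  by rewrite rpredM ?kk_real ?realn.
rewrite mulrACA kk2 !mxE ?(ix1_idx, ix2_idx).
case4 b c b' c'; rewrite /= ?mulr1n ?mulr0n; ring.
Qed.

Lemma ptrYm : ptr2 (proj psi_minus) = 2^-1 *: (Pm - Qm).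
Proof.
apply: eq4 => b c b' c'.
rewrite mxE ?(ix1_idx, ix2_idx) projE !psi_minusE conj_Creal; last first.
  by rewrite rpredM ?kk_real // rpredB ?realn.
rewrite mulrACA kk2 !mxE ?(ix1_idx, ix2_idx).
case4 b c b' c'; rewrite /= ?mulr1n ?mulr0n; ring.
Qed.

Lemma psdD n (A B : 'M[algC]_n) : psd A -> psd B -> psd (A + B).
Proof.
move=> [HA qA] [HB qB]; split; first by rewrite adjmxD HA HB.
by move=> v; rewrite mulmxDr mulmxDl mxE addr_ge0.
Qed.
Lemma psdZ n (c : algC) (A : 'M[algC]_n) : 0 <= c -> psd A -> psd (c *: A).
Proof.
move=> c0 [HA qA]; split; first by rewrite adjmxZ HA geC0_conj.
by move=> v; rewrite -scalemxAr -scalemxAl mxE mulr_ge0.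
Qed.

Lemma psd_sqrt_spec n (P : 'M[algC]_n) : psd P ->
  psd (psd_sqrt P) /\ psd_sqrt P *m psd_sqrt P = P.
Proof.
move=> HP; have [S' HS'] := psd_sqrt_ex HP.
exact: (epsilon_spec (inhabits 0) (fun S0 : 'M[algC]_n => psd S0 /\ S0 *m S0 = P)
  (ex_intro _ S' HS')).
Qed.

Lemma tensDl d m (X X' : 'M[algC]_(d * m)) (Y : 'M[algC]_(2 * 2)) :
  tens_AB1 (X + X') Y = tens_AB1 X Y + tens_AB1 X' Y.
Proof. by apply/matrixP => i j; rewrite !mxE mulrDl. Qed.
Lemma tensX0 d m (X : 'M[algC]_(d * m)) : tens_AB1 X 0 = 0.
Proof. by apply/matrixP => i j; rewrite !mxE mulr0. Qed.
Lemma sqZ n c (A : 'M[algC]_n) : (c *: A) *m (c *: A) = (c * c) *: (A *m A).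
Proof. by rewrite -scalemxAr -scalemxAl scalerA. Qed.
Lemma half_conj : (2^-1 : algC)^* = 2^-1.
Proof. by rewrite geC0_conj // invr_ge0 ler0n. Qed.

Unset Implicit Arguments.

Theorem mainTheorem4 (d m d' : nat)
    (rho1 rho2 : 'M[algC]_(d * m)) (p1 p2 : algC)
    (Hrho1 : density rho1) (Hrho2 : density rho2)
    (Hp1 : 0 <= p1) (Hp2 : 0 <= p2) (Hp : p1 + p2 = 1)
    (Lam : {linear 'M[algC]_d -> 'M[algC]_d'}) (HLam : CPTP Lam) :
  let rho : op4 d m :=
    p1 *: tens_AB1 rho1 (proj psi_plus) + p2 *: tens_AB1 rho2 (proj psi_minus) in
  negativity_ABC (apply_A (k := m * (2 * 2)) Lam rho) =
    trnorm (apply_A (k := m) Lam (p1 *: rho1 - p2 *: rho2)) / 2.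
Proof.
move=> rho.
have [HCP HTP] := HLam.
set s1 := apply_A (k := m) Lam rho1.
set s2 := apply_A (k := m) Lam rho2.
have ps1 : psd s1 by apply: HCP; exact: Hrho1.1.
have ps2 : psd s2 by apply: HCP; exact: Hrho2.1.
have tr1 : \tr s1 = 1 by rewrite tr_apply_A //; exact: Hrho1.2.
have tr2 : \tr s2 = 1 by rewrite tr_apply_A //; exact: Hrho2.2.
set D := apply_A (k := m) Lam (p1 *: rho1 - p2 *: rho2).
have DE : D = p1 *: s1 - p2 *: s2 by rewrite /D apply_AB !apply_AZ.
set S := p1 *: s1 + p2 *: s2.
have pS : psd S.
  exact: (psdD (psdZ Hp1 ps1) (psdZ Hp2 ps2)).
have adjS : adjmx S = S.
  by rewrite /S adjmxD !adjmxZ ps1.1 ps2.1 !geC0_conj.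
have adjD : adjmx D = D.
  by rewrite DE adjmxD adjmxN !adjmxZ ps1.1 ps2.1 !geC0_conj.
have trS : \tr S = 1 by rewrite /S mxtraceD !mxtraceZ tr1 tr2 !mulr1.
set R := psd_sqrt (adjmx D *m D).
have [pR RR] := psd_sqrt_spec (psd_gram D).
rewrite -/R in pR RR.
set M := ptransC (apply_A (k := m * (2 * 2)) Lam rho).
have ME : M = tens_AB1 (2^-1 *: S) Pm + tens_AB1 (2^-1 *: D) Qm.
  rewrite /M /rho apply_AD !apply_AZ !apply_A_tens -/s1 -/s2.
  rewrite ptransCD !ptransCZ !ptransC_tens ptrYp ptrYm DE /S.
  by apply/matrixP => i j; rewrite !mxE; ring.
have adjM : adjmx M = M.
  by rewrite ME adjmxD !adjmx_tens !adjmxZ half_conj adjS adjD adjPm adjQm.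
pose Sa := tens_AB1 (2^-1 *: S) Pm + tens_AB1 (2^-1 *: R) Pd.
have pSa : psd Sa.
  have h : 0 <= (2^-1 : algC) by rewrite invr_ge0 ler0n.
  exact: (psdD (psd_tens (psdZ h pS) psdPm) (psd_tens (psdZ h pR) psdPd)).
have Sa2 : Sa *m Sa = adjmx M *m M.
  rewrite adjM ME /Sa !mulmxDl !mulmxDr !tens_mul PmPm PmQm QmPm QmQm PmPd PdPm PdPd.
  by rewrite !tensX0 !addr0 !add0r !sqZ RR adjD.
have trSa : \tr Sa = 1 + \tr R.
  rewrite /Sa mxtraceD !tr_tens trPm trPd !mxtraceZ trS.
  by rewrite mulr1 -mulrA [\tr R * 2]mulrC mulrA !mulVf ?pnatr_eq0 // mul1r.
rewrite /negativity_ABC -/M (trnorm_charact pSa Sa2) trSa.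
by rewrite /trnorm -/R addrC addKr.
Qed.
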